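(* Let $\Gamma$ be a finite connected $(G,3)$-geodesic-transitive graph of girth $4$ or $5$, where $G\le \mathrm{Aut}(\Gamma)$. Let $N$ be a normal subgroup of $G$ having at least $3$ orbits on $V(\Gamma)$. Then $\Gamma$ is a cover of the normal quotient $\Gamma_N$, the graph $\Gamma_N$ is $(G/N,s')$-geodesic-transitive where $s'=\min\{3,\mathrm{diam}(\Gamma_N)\}$, and one of the following holds: (1) $\Gamma_N$ is a complete graph; (2) $\Gamma_N$ is a $(G/N,2)$-arc-transitive strongly regular graph with girth $4$ or $5$; (3) $\Gamma_N$ has diameter at least $3$ and the same girth as $\Gamma$.
   Context: All graphs are finite, simple and undirected. For a graph $\Gamma$, $d_\Gamma(u,v)$ denotes distance. An $s$-arc is a sequence $(v_0,\dots,v_s)$ of vertices with $v_i,v_{i+1}$ adjacent and $v_{j-1}\neq v_{j+1}$ for $1\le j\le s-1$. An $s$-geodesic is a path $(v_0,\dots,v_s)$ with $d_\Gamma(v_0,v_s)=s$. For $G\le\mathrm{Aut}(\Gamma)$, $\Gamma$ is $(G,s)$-geodesic-transitive if $\Gamma$ has an $s$-geodesic and $G$ is transitive on the set of $i$-geodesics for each $i\le s$ (the $0$-geodesics being vertices); $\Gamma$ is $(G,s)$-arc-transitive if $G$ is transitive on the set of $i$-arcs for each $i\le s$. For $N\trianglelefteq G$, the normal quotient $\Gamma_N$ is the graph whose vertices are the $N$-orbits on $V(\Gamma)$, two distinct orbits $B,C$ being adjacent iff some vertex of $B$ is adjacent to some vertex of $C$; $G/N$ acts on $\Gamma_N$.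 $\Gamma$ is a cover of $\Gamma_N$ if for each edge $\{B,C\}$ of $\Gamma_N$ and each $v\in B$, $v$ is adjacent to exactly one vertex of $C$. A strongly regular graph with parameters $(n,k,a,c)$ is a connected $k$-regular graph on $n$ vertices in which adjacent vertices have $a$ common neighbours and distinct non-adjacent vertices have $c$ common neighbours. *)

(* Defs.v *)
From mathcomp Require Import all_boot all_fingroup.
Set Implicit Arguments. Unset Strict Implicit. Unset Printing Implicit Defensive.

Section GraphDefs.
Variables (V : finType) (VS : {set V}) (e : rel V).

Definition adj (x y : V) : bool := [&& x \in VS, y \in VS & e x y].

Fixpoint ball (k : nat) (u : V) : {set V} :=
  if k is k'.+1 then ball k' u :|: [set y | [exists x in ball k' u, adj x y]]
  else [set u].

Definition connectedg : Prop :=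
  forall x y, x \in VS -> y \in VS -> y \in ball #|VS| x.

(* graph distance (meaningful for connected graphs) *)
Definition dist (u v : V) : nat := find (fun k => v \in ball k u) (iota 0 #|VS|.+1).

Definition diam : nat := \max_(u in VS) \max_(v in VS) dist u v.

(* x :: p is an (size p)-geodesic *)
Definition geodesic (x : V) (p : seq V) : bool :=
  [&& x \in VS, path adj x p & dist x (last x p) == size p].

(* x :: p is an (size p)-arc *)
Definition sarc (x : V) (p : seq V) : bool :=
  [&& x \in VS, path adj x p &
      all (fun j => nth x (x :: p) j != nth x (x :: p) j.+2) (iota 0 (size p).-1)].

Definition has_cycle (k : nat) : bool :=
  [exists c : k.-tuple V, uniq c && path.cycle adj c].

Definition girth_is (g : nat) : Prop :=
  3 <= g /\ has_cycle g /\ forall k, 3 <= k < g -> ~~ has_cycle k.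

Definition complete_graph : Prop :=
  forall x y, x \in VS -> y \in VS -> x != y -> adj x y.

Definition strongly_regular : Prop :=
  connectedg /\ exists (n k a c : nat),
    [/\ #|VS| = n,
        forall x, x \in VS -> #|[set y in VS | adj x y]| = k,
        forall x y, adj x y -> #|[set z in VS | adj x z && adj y z]| = a &
        forall x y, x \in VS -> y \in VS -> x != y -> ~~ adj x y ->
          #|[set z in VS | adj x z && adj y z]| = c].

Variables (gT : finGroupType) (H : {set gT}) (act : gT -> V -> V).

Definition geodesic_transitive (s : nat) : Prop :=
  (exists x p, geodesic x p /\ size p = s) /\
  forall i, i <= s -> forall x p y q,
    geodesic x p -> geodesic y q -> size p = i -> size q = i ->
    exists2 h, h \in H & act h x = y /\ map (act h) p = q.

Definition arc_transitive (s : nat) : Prop :=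
  forall i, i <= s -> forall x p y q,
    sarc x p -> sarc y q -> size p = i -> size q = i ->
    exists2 h, h \in H & act h x = y /\ map (act h) p = q.

End GraphDefs.

Section Quotient.
Variables (T : finType) (e : rel T) (N : {group {perm T}}).

Definition Norbits : {set {set T}} := [set [set (n : {perm T}) x | n in N] | x : T].

Definition qadj : rel {set T} :=
  fun B C => (B != C) && [exists x in B, exists y in C, e x y].

Definition is_cover : Prop :=
  forall B C, adj Norbits qadj B C ->
    forall v, v \in B -> #|[set y in C | e v y]| = 1.

(* action of G/N on the vertices of Gamma_N: (N g) . B = g(B) *)
Definition qactN (c : coset_of N) (B : {set T}) : {set T} := [set (repr c) x | x in B].
End Quotient.

(* Main.v *)
Require Import Defs.
From mathcomp Require Import all_boot all_fingroup.
Set Implicit Arguments. Unset Strict Implicit. Unset Printing Implicit Defensive.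

Section Gen.
Variables (V : finType) (VS : {set V}) (e : rel V).
Local Notation adj := (adj VS e).
Local Notation ball := (ball VS e).
Local Notation dist := (dist VS e).

Lemma ballP k u y :
  y \in ball k u <-> exists p, [/\ path adj u p, last u p = y & size p <= k].
Proof.
elim: k y => [|k IH] y /=.
  rewrite inE; split; first by move/eqP->; exists [::].
  by case=> [[|a p]] [] //= _ ->.
rewrite inE; split.
  case/orP=> [/IH [p [H1 H2 H3]]|].
    by exists p; split => //; apply: leqW.
  rewrite inE => /existsP [x /andP [/IH [p [H1 H2 H3]] Hxy]].
  exists (rcons p y); rewrite rcons_path last_rcons size_rcons H1 H2 Hxy.
  by split.
case=> p [H1 H2 H3].
have [Hs|Hs] := leqP (size p) k.
  by apply/orP; left; apply/IH; exists p.
have Esz : size p = k.+1 by apply/eqP; rewrite eqn_leq H3.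
apply/orP; right; rewrite inE.
move: H1 H2 Esz {H3 Hs}; case/lastP: p => [|q z] //; rewrite rcons_path last_rcons size_rcons.
case/andP=> Hq Hz <- [Eq]; apply/existsP; exists (last u q).
rewrite Hz andbT; apply/IH; exists q; split => //; by rewrite Eq.
Qed.

Lemma path_in u p : path adj u p -> all (fun x => x \in VS) p.
Proof.
elim: p u => //= a p IH u /andP [Ha Hp].
by case/and3P: Ha => _ -> _; rewrite (IH a).
Qed.

Lemma last_in u p : u \in VS -> path adj u p -> last u p \in VS.
Proof.
elim: p u => //= a p IH u _ /andP [Ha Hp].
by apply: IH => //; case/and3P: Ha.
Qed.

Lemma shorten_walk u p : u \in VS -> path adj u p ->
  exists q, [/\ path adj u q, last u q = last u p & size q < #|VS|].
Proof.
move=> Hu Hp; case: (shortenP Hp) => q Hq Hun Hsub.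
exists q; split => //.
have := uniq_leq_size (s2 := enum VS) Hun.
rewrite -cardE /=; apply => x; rewrite inE mem_enum => /orP [/eqP->//|].
move=> Hx; exact: (allP (path_in Hq)) x Hx.
Qed.

Lemma has_cycleP k : has_cycle VS e k <->
  exists s, [/\ size s = k, uniq s & path.cycle adj s].
Proof.
split.
  by case/existsP=> t /andP [H1 H2]; exists (val t); rewrite size_tuple.
case=> s [Hs H1 H2]; apply/existsP.
have Hs' : size s == k by rewrite Hs.
by exists (Tuple Hs'); rewrite /= H1 H2.
Qed.

Hypothesis conn : connectedg VS e.

Lemma dist_spec u y : u \in VS -> y \in VS ->
  y \in ball (dist u y) u /\ forall k, k < dist u y -> y \notin ball k u.
Proof.
move=> Hu Hy.
have Hhas : has (fun k => y \in ball k u) (iota 0 #|VS|.+1).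
  apply/hasP; exists #|VS|; first by rewrite mem_iota add0n ltnSn.
  exact: conn.
have Hlt := Hhas; rewrite has_find size_iota in Hlt.
split.
  by have := nth_find 0 Hhas; rewrite nth_iota // add0n.
move=> k Hk; have := before_find 0 Hk.
rewrite nth_iota ?add0n; first by move=> ->.
exact: ltn_trans Hk Hlt.
Qed.

Lemma ball_mono k k' u : k <= k' -> {subset ball k u <= ball k' u}.
Proof.
move=> Hk y /ballP [p [H1 H2 H3]]; apply/ballP; exists p; split => //.
exact: leq_trans Hk.
Qed.

Lemma distP u y k : u \in VS -> y \in VS ->
  (dist u y <= k) <-> exists p, [/\ path adj u p, last u p = y & size p <= k].
Proof.
move=> Hu Hy; have [H1 H2] := dist_spec Hu Hy; split.
  by move=> Hk; apply/ballP; apply: ball_mono Hk _ H1.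
by move/ballP=> Hb; rewrite leqNgt; apply/negP => /H2; rewrite Hb.
Qed.

Lemma dist_path u p : u \in VS -> path adj u p -> dist u (last u p) <= size p.
Proof.
move=> Hu Hp; apply/distP => //; first exact: last_in.
by exists p.
Qed.

Lemma geodesicP u p : geodesic VS e u p <->
  [/\ u \in VS, path adj u p &
     forall q, path adj u q -> last u q = last u p -> size p <= size q].
Proof.
rewrite /geodesic; split.
  case/and3P=> Hu Hp /eqP Hd; split => // q Hq Hl.
  by rewrite -Hd -Hl; apply: dist_path.
case=> Hu Hp Hq; rewrite Hu Hp /= eqn_leq dist_path //=.
have Hl := last_in Hu Hp.
have [H1 _] := dist_spec Hu Hl.
case/ballP: H1 => q [H1 H2 H3]; apply: leq_trans H3; exact: Hq.
Qed.

Lemma dist_refl u : u \in VS -> dist u u = 0.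
Proof.
move=> Hu; apply/eqP; rewrite -leqn0; apply/distP => //.
by exists [::].
Qed.

Lemma dist_le_diam u v : u \in VS -> v \in VS -> dist u v <= diam VS e.
Proof.
move=> Hu Hv; rewrite /diam.
apply: leq_trans (leq_bigmax_cond u Hu).
exact: (leq_bigmax_cond v Hv).
Qed.

Lemma geodesic_prefix u v s : u \in VS -> v \in VS -> s <= dist u v ->
  exists p, geodesic VS e u p /\ size p = s.
Proof.
move=> Hu Hv Hs.
have [H1 _] := dist_spec Hu Hv.
case/ballP: H1 => p [Hp Hl Hsz].
have Hsz' : size p = dist u v.
  apply/eqP; rewrite eqn_leq Hsz /=; rewrite -{1}Hl; exact: dist_path.
exists (take s p); split; last by rewrite size_take Hsz'; case: ltngtP Hs.
apply/geodesicP; split => //; first exact: take_path.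
move=> q Hq Hql; rewrite leqNgt; apply/negP => Hlt.
have Hp2 : path adj u (q ++ drop s p).
  rewrite cat_path Hq Hql /=.
  by move: Hp; rewrite -{1}(cat_take_drop s p) cat_path => /andP [].
have := dist_path Hu Hp2.
rewrite last_cat Hql -last_cat cat_take_drop Hl size_cat size_drop Hsz'.
move: Hlt; rewrite size_take Hsz'.
have -> : (if s < dist u v then s else dist u v) = s by case: ltngtP Hs.
move=> Hlt H; have : size q + (dist u v - s) < s + (dist u v - s).
  by rewrite ltn_add2r.
rewrite subnKC // => H2; have := leq_ltn_trans H H2; by rewrite ltnn.
Qed.

End Gen.
Section Main.
Variables (T : finType) (e : rel T) (G N : {group {perm T}}).
Hypotheses (esym : symmetric e) (eirr : irreflexive e)
  (eG : forall g, g \in G -> forall x y, e (g x) (g y) = e x y)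
  (conn : connectedg [set: T] e)
  (gt : geodesic_transitive [set: T] e G (fun g x => g x) 3)
  (nN : (N <| G)%g)
  (gir : girth_is [set: T] e 4 \/ girth_is [set: T] e 5)
  (n3 : 3 <= #|Norbits N|).

Definition pi (x : T) : {set T} := [set (n : {perm T}) x | n in N].
Local Notation adjN := (adj (Norbits N) (qadj e)).
Local Notation ONS := (Norbits N).

Lemma NG n : n \in N -> n \in G.
Proof. by move=> Hn; apply: (subsetP (normal_sub nN)). Qed.

Lemma GnN g : g \in G -> (g \in 'N(N))%g.
Proof. by move=> Hg; apply: (subsetP (normal_norm nN)). Qed.

Lemma adjT x y : adj [set: T] e x y = e x y.
Proof. by rewrite /adj !inE. Qed.

Lemma pathT x p : path (adj [set: T] e) x p = path e x p.
Proof. by apply: eq_path => a b; rewrite adjT. Qed.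

Lemma pi_self x : x \in pi x.
Proof. by apply/imsetP; exists 1%g; rewrite ?group1 ?perm1. Qed.

Lemma piP x y : reflect (exists2 n, n \in N & y = n x) (y \in pi x).
Proof. by apply: (iffP imsetP) => [[n Hn ->]|[n Hn ->]]; exists n. Qed.

Lemma pi_N n x : n \in N -> pi (n x) = pi x.
Proof.
move=> Hn; apply/setP => y; apply/piP/piP => [[m Hm ->]|[m Hm ->]].
  by exists (n * m)%g; rewrite ?groupM ?permM.
exists (n^-1 * m)%g; first by rewrite groupM ?groupV.
by rewrite permM permK.
Qed.

Lemma pi_mem x y : y \in pi x -> pi y = pi x.
Proof. by case/piP=> n Hn ->; apply: pi_N. Qed.

Lemma pi_eqP x y : pi x = pi y -> y \in pi x.
Proof. by move=> ->; apply: pi_self. Qed.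

Lemma pi_G g x : g \in G -> [set g y | y in pi x] = pi (g x).
Proof.
move=> Hg; apply/setP => z; apply/imsetP/piP.
  case=> y /piP [m Hm ->] ->; exists (g^-1 * m * g)%g.
    have -> : (g^-1 * m * g = m ^ g)%g by rewrite /conjg mulgA.
    by rewrite memJ_norm // GnN.
  by rewrite !permM permK.
case=> m Hm ->; exists ((g * m * g^-1)%g x).
  apply/piP; exists (g * m * g^-1)%g => //.
  have -> : (g * m * g^-1 = m ^ g^-1)%g by rewrite /conjg invgK mulgA.
  by rewrite memJ_norm // GnN ?groupV.
by rewrite !permM permKV.
Qed.

Lemma pi_Geq g x y : g \in G -> pi x = pi y -> pi (g x) = pi (g y).
Proof. by move=> Hg E; rewrite -!pi_G // E. Qed.

Lemma pi_in x : pi x \in ONS.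
Proof. by apply/imsetP; exists x. Qed.

Lemma ONSP B : B \in ONS -> exists x, B = pi x.
Proof. by case/imsetP=> x _ ->; exists x. Qed.

Lemma qact_pi g x : g \in G -> qactN (coset N g) (pi x) = pi (g x).
Proof.
move=> Hg; rewrite /qactN.
have : (repr (coset N g) \in N :* g)%g.
  by rewrite -val_coset ?GnN //; apply: mem_repr_coset.
case/rcosetP=> n Hn ->.
have -> : [set (n * g)%g y | y in pi x] = [set g y | y in [set n y | y in pi x]].
  by rewrite -imset_comp; apply: eq_imset => y; rewrite /= permM.
by rewrite pi_G ?NG // pi_N // pi_G.
Qed.

Lemma eN n x y : n \in N -> e (n x) (n y) = e x y.
Proof. by move=> Hn; apply: eG; apply: NG. Qed.


Lemma geodT x p : geodesic [set: T] e x p <->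
  path e x p /\ (forall q, path e x q -> last x q = last x p -> size p <= size q).
Proof.
split.
  case/(geodesicP conn)=> _ Hp Hq; split; first by rewrite -pathT.
  by move=> q Hq'; apply: Hq; rewrite pathT.
case=> Hp Hq; apply/(geodesicP conn); split; rewrite ?inE ?pathT //.
by move=> q; rewrite pathT; apply: Hq.
Qed.

Lemma vt x y : exists2 g, g \in G & g x = y.
Proof.
have [_ H] := gt.
have Hg : forall z, geodesic [set: T] e z [::] by move=> z; apply/geodT.
by case: (H 0 (leq0n _) x [::] y [::] (Hg x) (Hg y) erefl erefl) => g Hg' [? _]; exists g.
Qed.

Lemma geod1 x y : e x y -> geodesic [set: T] e x [:: y].
Proof.
move=> Hxy; apply/geodT; split; first by rewrite /= Hxy.
case=> [|a q] //= _ E; by rewrite E eirr in Hxy.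
Qed.

Lemma at1 x y x' y' : e x y -> e x' y' ->
  exists2 g, g \in G & g x = x' /\ g y = y'.
Proof.
move=> H1 H2; have [_ H] := gt.
case: (H 1 isT x [:: y] x' [:: y'] (geod1 H1) (geod1 H2) erefl erefl) => g Hg [? [E]].
by exists g.
Qed.

Lemma girth3 : ~~ has_cycle [set: T] e 3.
Proof. by case: gir => [[_ [_ H]]|[_ [_ H]]]; apply: H. Qed.

Lemma notriT x y z : e x y -> e y z -> e z x -> False.
Proof.
move=> H1 H2 H3; move/negP: girth3; apply; apply/has_cycleP.
have nxy : x != y by apply/eqP => E; rewrite E eirr in H1.
have nyz : y != z by apply/eqP => E; rewrite E eirr in H2.
have nzx : z != x by apply/eqP => E; rewrite E eirr in H3.
exists [:: x; y; z]; split => //=; rewrite ?inE ?negb_or ?nxy ?nyz 1?eq_sym ?nzx //.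
by rewrite !adjT H1 H2 H3.
Qed.

Lemma geod2 x y z : e x y -> e y z -> x != z -> geodesic [set: T] e x [:: y; z].
Proof.
move=> H1 H2 H3; apply/geodT; split; first by rewrite /= H1 H2.
case=> [|a [|b q]] /=; last by [].
  by move=> _ E; rewrite E eqxx in H3.
by rewrite andbT => Ha Ea; subst a; case: (notriT H1 H2); rewrite esym.
Qed.

Lemma at2 x y z x' y' z' : e x y -> e y z -> x != z ->
  e x' y' -> e y' z' -> x' != z' ->
  exists2 g, g \in G & [/\ g x = x', g y = y' & g z = z'].
Proof.
move=> H1 H2 H3 H4 H5 H6; have [_ H] := gt.
case: (H 2 isT x [:: y; z] x' [:: y'; z'] (geod2 H1 H2 H3) (geod2 H4 H5 H6) erefl erefl)
  => g Hg [? [E1 E2]].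
by exists g.
Qed.

Lemma closed_walk (S : {set T}) v p : (forall x y, x \in S -> e x y -> y \in S) ->
  v \in S -> path e v p -> last v p \in S.
Proof.
move=> HS; elim: p v => //= a p IH v Hv /andP [Ha Hp].
by apply: IH => //; apply: HS Ha.
Qed.

Lemma one_orbit v a : e v a -> (forall c, e v c -> pi c = pi a) -> False.
Proof.
move=> Hva Hall.
have Ha : forall c, e a c -> pi c = pi v.
  move=> c Hc; have [h Hh Ehv] := vt v a.
  have E1 : pi ((h^-1)%g c) = pi a by apply: Hall; rewrite -(eG Hh) Ehv permKV.
  have E2 : pi ((h^-1)%g v) = pi a by apply: Hall; rewrite -(eG Hh) Ehv permKV esym.
  have := pi_Geq (Hh) (etrans E1 (Logic.eq_sym E2)).
  by rewrite !permKV.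
pose S := [set x | (pi x == pi v) || (pi x == pi a)].
have HS : forall x y, x \in S -> e x y -> y \in S.
  move=> x y; rewrite !inE => /orP [/eqP Ex|/eqP Ex] Hxy.
    have /piP [n Hn Exn] := pi_eqP (Logic.eq_sym Ex).
    have : e v ((n^-1)%g y) by rewrite -(eN _ _ Hn) permKV -Exn.
    move/Hall; rewrite pi_N ?groupV // => ->; by rewrite eqxx orbT.
  have /piP [n Hn Exn] := pi_eqP (Logic.eq_sym Ex).
  have : e a ((n^-1)%g y) by rewrite -(eN _ _ Hn) permKV -Exn.
  move/Ha; rewrite pi_N ?groupV // => ->; by rewrite eqxx.
have Hsub : ONS \subset [set pi v; pi a].
  apply/subsetP => B /ONSP [y ->].
  have : y \in ball [set: T] e #|[set: T]| v by apply: conn; rewrite inE.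
  case/ballP=> p [Hp Hl _]; rewrite pathT in Hp.
  have := closed_walk HS _ Hp; rewrite Hl inE eqxx => /(_ isT).
  by rewrite !inE.
have := subset_leq_card Hsub; rewrite cards2.
move=> H; have := leq_trans n3 H; by case: (pi v != pi a).
Qed.

Lemma coverU v a b : e v a -> e v b -> pi a = pi b -> a = b.
Proof.
move=> Ha Hb Eab; apply/eqP; apply/negP => /negP Hab.
apply: (one_orbit Ha) => c Hc.
have [->|Hac] := eqVneq c a; first by [].
have Hav : e a v by rewrite esym.
have Hac' : a != c by rewrite eq_sym.
have [g Hg [E1 E2 E3]] := at2 Hav Hb Hab Hav Hc Hac'.
by rewrite -E3 (pi_Geq Hg (Logic.eq_sym Eab)) E1.
Qed.

Lemma coverW x y : e x y -> pi x != pi y.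
Proof.
move=> Hxy; apply/negP => /eqP Exy.
apply: (one_orbit Hxy) => c Hc.
have [g Hg [E1 E2]] := at1 Hxy Hc.
by rewrite -E2 -(pi_Geq Hg Exy) E1.
Qed.



Lemma adjN_lift v C : adjN (pi v) C -> exists2 y, e v y & pi y = C.
Proof.
case/and3P=> _ HC /andP [_ /existsP [x /andP [Hx /existsP [y /andP [Hy Exy]]]]].
case/piP: Hx => n Hn Ex; subst x.
have [z Ez] := ONSP HC; subst C.
exists ((n^-1)%g y); first by rewrite -(eN _ _ Hn) permKV.
by rewrite pi_N ?groupV // (pi_mem Hy).
Qed.

Lemma adjN_proj x y : e x y -> adjN (pi x) (pi y).
Proof.
move=> Hxy; rewrite /adj !pi_in /qadj coverW //=.
apply/existsP; exists x; rewrite pi_self /=; apply/existsP; exists y.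
by rewrite pi_self.
Qed.

Lemma adjN_in B C : adjN B C -> B \in ONS /\ C \in ONS.
Proof. by case/and3P. Qed.

Lemma adjN_neq B C : adjN B C -> B != C.
Proof. by case/and3P=> _ _ /andP []. Qed.

Lemma adjN_sym B C : adjN B C -> adjN C B.
Proof.
move=> H; have [HB _] := adjN_in H; have [v Ev] := ONSP HB; subst B.
have [y Hy <-] := adjN_lift H; apply: adjN_proj; by rewrite esym.
Qed.

Lemma adjN_G g x y : g \in G -> adjN (pi x) (pi y) -> adjN (pi (g x)) (pi (g y)).
Proof.
move=> Hg /adjN_lift [z Hz Ez].
rewrite -(pi_Geq Hg Ez); apply: adjN_proj; by rewrite eG.
Qed.

Lemma proj_path v p : path e v p -> path adjN (pi v) (map pi p).
Proof.
elim: p v => //= a p IH v /andP [Ha Hp].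
by rewrite adjN_proj // IH.
Qed.

Lemma lift_path v P : path adjN (pi v) P -> exists p, path e v p /\ map pi p = P.
Proof.
elim: P v => [|C P IH] v /=; first by exists [::].
case/andP=> /adjN_lift [y Hy Ey]; subst C => /IH [p [Hp Ep]].
by exists (y :: p); rewrite /= Hy Hp Ep.
Qed.

Lemma is_cov : is_cover e N.
Proof.
move=> B C H v Hv.
have [HB _] := adjN_in H; have [z Ez] := ONSP HB; subst B.
rewrite -(pi_mem Hv) in H.
have [y Hy Ey] := adjN_lift H.
apply: (@eq_card1 _ y) => y'; rewrite !inE.
apply/andP/eqP => [[Hy' Hvy']|->]; last by rewrite -Ey pi_self.
apply: (coverU Hvy' Hy); rewrite Ey.
have [_ HC] := adjN_in H; have [w Ew] := ONSP HC; subst C.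
exact: pi_mem.
Qed.

Lemma connN : connectedg ONS (qadj e).
Proof.
move=> B C HB HC.
have [x Ex] := ONSP HB; have [y Ey] := ONSP HC; subst B C.
have : y \in ball [set: T] e #|[set: T]| x by apply: conn; rewrite inE.
case/ballP=> p [Hp Hl _]; rewrite pathT in Hp.
have [q [Hq Hql Hsz]] := shorten_walk (pi_in x) (proj_path Hp).
apply/ballP; exists q; split => //; last exact: ltnW.
by rewrite Hql last_map Hl.
Qed.

Local Notation distN := (dist ONS (qadj e)).
Local Notation distT := (dist [set: T] e).

Lemma distN_le x y : distN (pi x) (pi y) <= distT x y.
Proof.
have := leqnn (distT x y); case/(distP conn); rewrite ?inE // => p [Hp Hl Hs].
apply/(distP connN); rewrite ?pi_in //.
exists (map pi p); rewrite size_map last_map Hl; split => //.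
by apply: proj_path; rewrite -pathT.
Qed.

Lemma lift_geod x P : geodesic ONS (qadj e) (pi x) P ->
  exists p, geodesic [set: T] e x p /\ map pi p = P.
Proof.
case/and3P=> _ HP /eqP Hd.
have [p [Hp Ep]] := lift_path HP; exists p; split => //.
rewrite /geodesic inE pathT Hp /= eqn_leq dist_path ?inE ?pathT //=.
by rewrite -(size_map pi) Ep -Hd -Ep last_map distN_le.
Qed.


Lemma transport g p : g \in G ->
  map (qactN (coset N g)) (map pi p) = map pi (map g p).
Proof.
by move=> Hg; rewrite -!map_comp; apply: eq_map => z /=; rewrite qact_pi.
Qed.

Lemma ONS_gt0 : 0 < #|ONS|.
Proof. exact: leq_trans n3. Qed.

Lemma diam_attained : exists B C, [/\ B \in ONS, C \in ONS & distN B C = diam ONS (qadj e)].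
Proof.
rewrite /diam.
have [B HB ->] := eq_bigmax_cond (fun u => \max_(v in ONS) distN u v) ONS_gt0.
have [C HC ->] := eq_bigmax_cond (fun v => distN B v) ONS_gt0.
by exists B, C.
Qed.

Lemma geodN_exists s : s <= diam ONS (qadj e) ->
  exists x P, geodesic ONS (qadj e) x P /\ size P = s.
Proof.
move=> Hs; have [B [C [HB HC Hd]]] := diam_attained.
have Hs2 : s <= distN B C by rewrite Hd.
have [P HP] := geodesic_prefix connN HB HC Hs2.
by exists B, P.
Qed.

Lemma gtN : geodesic_transitive ONS (qadj e) (G / N)%g (@qactN _ N)
    (minn 3 (diam ONS (qadj e))).
Proof.
split; first by apply: geodN_exists; apply: geq_minr.
move=> i Hi B P B' P' HP HP' Hs Hs'.
have Hi3 : i <= 3 by apply: leq_trans Hi (geq_minl _ _).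
have [x Ex] := ONSP (proj1 (andP HP)); subst B.
have [x' Ex'] := ONSP (proj1 (andP HP')); subst B'.
have [p [Hp Ep]] := lift_geod HP; have [p' [Hp' Ep']] := lift_geod HP'.
have [_ H] := gt.
have S1 : size p = i by rewrite -Hs -Ep size_map.
have S2 : size p' = i by rewrite -Hs' -Ep' size_map.
have [g Hg [E1 E2]] := H i Hi3 x p x' p' Hp Hp' S1 S2.
exists (coset N g); first exact: mem_quotient.
by rewrite qact_pi // E1 -Ep transport // E2 Ep'.
Qed.


Local Notation d := (diam ONS (qadj e)).

Lemma adjN_of_dist B C : B \in ONS -> C \in ONS -> B != C -> distN B C <= 1 -> adjN B C.
Proof.
move=> HB HC HBC /(distP connN _ HB HC) [[|D [|E P]] [Hp Hl Hs]] //=.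
  by rewrite /= in Hl; rewrite Hl eqxx in HBC.
by rewrite /= in Hl; subst D; rewrite /= andbT in Hp.
Qed.

Lemma dist_adjN B C : adjN B C -> distN B C <= 1.
Proof.
move=> H; have [HB HC] := adjN_in H.
by apply/(distP connN _ HB HC); exists [:: C]; rewrite /= H.
Qed.

Lemma complete_case : d <= 1 -> complete_graph ONS (qadj e).
Proof.
move=> Hd B C HB HC HBC; apply: adjN_of_dist => //.
exact: leq_trans (dist_le_diam _ HB HC) Hd.
Qed.

Lemma geod2N_lift : 2 <= d -> exists x0 y0 z0,
  [/\ e x0 y0, e y0 z0, x0 != z0 & distN (pi x0) (pi z0) = 2].
Proof.
move=> Hd; have [B [P [HP Hs]]] := geodN_exists Hd.
have [x Ex] := ONSP (proj1 (andP HP)); subst B.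
have [p [Hp Ep]] := lift_geod HP.
move: Hs; rewrite -Ep size_map; case: p Hp Ep => [|y [|z [|]]] //= Hp Ep _.
case/and3P: Hp => _; rewrite pathT /= andbT => /andP [H1 H2] _.
case/and3P: HP => _ _; rewrite -Ep /= => /eqP HD.
exists x, y, z; split => //.
apply/negP => /eqP E; subst z.
by rewrite (dist_refl connN) ?pi_in in HD.
Qed.

Lemma notriN B C D : 2 <= d -> adjN B C -> adjN C D -> adjN B D -> False.
Proof.
move=> Hd HBC HCD HBD.
have [x0 [y0 [z0 [H1 H2 H3 H4]]]] := geod2N_lift Hd.
have [HC _] := adjN_in HCD; have [v1 Ev1] := ONSP HC; subst C.
have [v0 Hv0 Ev0] := adjN_lift (adjN_sym HBC); subst B.
have [v2 Hv2 Ev2] := adjN_lift HCD; subst D.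
have Hn : v0 != v2 by apply/negP => /eqP E; subst v2; move: (adjN_neq HBD); rewrite eqxx.
have [g Hg [E1 E2 E3]] := at2 (etrans (esym _ _) Hv0) Hv2 Hn H1 H2 H3.
have := adjN_G Hg HBD; rewrite E1 E3 => /dist_adjN; by rewrite H4.
Qed.

Lemma notriN_cyc : 2 <= d -> ~~ has_cycle ONS (qadj e) 3.
Proof.
move=> Hd; apply/negP => /has_cycleP [s [Hs Hu Hc]].
case: s Hs Hu Hc => [|B [|C [|D [|]]]] //= _ _.
rewrite andbT => /and3P [H1 H2 H3].
exact: (notriN Hd H1 H2 (adjN_sym H3)).
Qed.

Lemma neqU v a b : e v a -> e v b -> a != b -> pi a != pi b.
Proof. by move=> H1 H2 H3; apply/negP => /eqP /(coverU H1 H2) /eqP; rewrite (negbTE H3). Qed.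

Lemma cyc4N : has_cycle [set: T] e 4 -> has_cycle ONS (qadj e) 4.
Proof.
case/has_cycleP=> s [Hs Hu Hc].
case: s Hs Hu Hc => [|a [|b [|c [|f [|]]]]] //= _.
rewrite !inE !negb_or !adjT andbT => /and3P [/and3P [Hab Hac Haf] /andP [Hbc Hbf] _].
case/and4P=> [H1 H2 H3 /andP [H4 _]].
have n1 : pi a != pi b by apply: coverW.
have n2 : pi a != pi c by apply: (neqU (v := b)); rewrite // esym.
have n3' : pi a != pi f by move: (coverW H4); rewrite eq_sym.
have n4 : pi b != pi c by apply: coverW.
have n5 : pi b != pi f by apply: (neqU (v := c)); rewrite // esym.
have n6 : pi c != pi f by apply: coverW.
apply/has_cycleP; exists [:: pi a; pi b; pi c; pi f]; split => //=.
  by rewrite !inE !negb_or n1 n2 n3' n4 n5 n6.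
by rewrite !adjN_proj.
Qed.

Lemma cyc5N : has_cycle [set: T] e 5 -> has_cycle ONS (qadj e) 5.
Proof.
case/has_cycleP=> s [Hs Hu Hc].
case: s Hs Hu Hc => [|a [|b [|c [|f [|h [|]]]]]] //= _.
rewrite !inE !negb_or !adjT andbT.
case/andP=> [/and4P [Hab Hac Haf Hah] /andP [/and3P [Hbc Hbf Hbh] /andP [/andP [Hcf Hch] _]]].
case/and5P=> [H1 H2 H3 H4 /andP [H5 _]].
have n1 : pi a != pi b by apply: coverW.
have n2 : pi a != pi c by apply: (neqU (v := b)); rewrite // esym.
have n3' : pi a != pi f by apply: (neqU (v := h)); rewrite // esym.
have n4 : pi a != pi h by move: (coverW H5); rewrite eq_sym.
have n5 : pi b != pi c by apply: coverW.
have n6 : pi b != pi f by apply: (neqU (v := c)); rewrite // esym.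
have n7 : pi b != pi h by apply: (neqU (v := a)); rewrite // esym.
have n8 : pi c != pi f by apply: coverW.
have n9 : pi c != pi h by apply: (neqU (v := f)); rewrite // esym.
have n10 : pi f != pi h by apply: coverW.
apply/has_cycleP; exists [:: pi a; pi b; pi c; pi f; pi h]; split => //=.
  by rewrite !inE !negb_or n1 n2 n3' n4 n5 n6 n7 n8 n9 n10.
by rewrite !adjN_proj.
Qed.


Lemma no4N : girth_is [set: T] e 5 -> 3 <= d -> ~~ has_cycle ONS (qadj e) 4.
Proof.
move=> Hg5 Hd; apply/negP => /has_cycleP [s [Hs Hu Hc]].
case: s Hs Hu Hc => [|B0 [|B1 [|B2 [|B3 [|]]]]] //= _ Hu.
case/and4P=> [H1 H2 H3 /andP [H4 _]].
have [HB0 _] := adjN_in H1; have [v0 Ev0] := ONSP HB0; subst B0.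
have [v1 E1 Ev1] := adjN_lift H1; subst B1.
have [v2 E2 Ev2] := adjN_lift H2; subst B2.
have [v3 E3 Ev3] := adjN_lift H3; subst B3.
have Hw : path e v0 [:: v1; v2; v3] by rewrite /= E1 E2 E3.
have Hdist : distT v0 v3 <= 3.
  have Hw' : path (adj [set: T] e) v0 [:: v1; v2; v3] by rewrite pathT.
  exact: (dist_path conn (in_setT v0) Hw').
have [Heq|Hne] := eqVneq (distT v0 v3) 3.
  have Hgeo : geodesic [set: T] e v0 [:: v1; v2; v3] by rewrite /geodesic inE pathT Hw /= Heq.
  have [C [Q [HQ HsQ]]] := geodN_exists Hd.
  have [u0 Eu0] := ONSP (proj1 (andP HQ)); subst C.
  have [q [Hq Eq]] := lift_geod HQ.
  have Sq : size q = 3 by rewrite -HsQ -Eq size_map.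
  have [_ H] := gt.
  have [g Hg [Eg1 Eg2]] := H 3 isT v0 [:: v1; v2; v3] u0 q Hgeo Hq erefl Sq.
  case/and3P: HQ => _ _ /eqP HD.
  have := adjN_G Hg (adjN_sym H4).
  rewrite Eg1 => /dist_adjN.
  have Hl : last (pi u0) Q = pi (g v3) by rewrite -Eq last_map -Eg2.
  by rewrite -Hl HD HsQ.
have Hle2 : distT v0 v3 <= 2 by move: Hdist; rewrite leq_eqVlt (negbTE Hne).
case/(distP conn _ (in_setT v0) (in_setT v3)): Hle2 => q [Hq Hl Hsq].
rewrite pathT in Hq.
case: q Hq Hl Hsq => [|w [|z [|]]] //= Hq Hl _.
- by subst v3; move: Hu; rewrite /= !inE eqxx !orbT.
- subst w; rewrite andbT in Hq.
  case: Hg5 => [_ [_ Hx]]; move/negP: (Hx 4 isT); apply; apply/has_cycleP.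
  exists [:: v0; v1; v2; v3]; split => //.
    by apply: (@map_uniq _ _ pi); exact: Hu.
  by rewrite /= !adjT E1 E2 E3 esym Hq.
- subst z; case/andP: Hq => Hq1 /andP [Hq2 _].
  apply: (notriN (B := pi v0) (C := pi w) (D := pi v3) (leq_trans (isT : 2 <= 3) Hd)); [exact: adjN_proj|exact: adjN_proj|].
  exact: adjN_sym.
Qed.


Local Notation cnt B C := #|[set Z in ONS | adjN B Z && adjN C Z]|.

Lemma cnt_le g x y : g \in G -> cnt (pi x) (pi y) <= cnt (pi (g x)) (pi (g y)).
Proof.
move=> Hg.
have Hinj : injective (fun Z : {set T} => [set g z | z in Z]) := imset_inj (@perm_inj _ g).
rewrite -(card_imset _ Hinj); apply: subset_leq_card; apply/subsetP => W /imsetP [Z HZ ->].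
rewrite inE in HZ; case/and3P: HZ => HZO HZ1 HZ2.
have [z Ez] := ONSP HZO; subst Z.
by rewrite pi_G // inE pi_in !adjN_G.
Qed.

Lemma cnt_eq g x y x' y' : g \in G -> g x = x' -> g y = y' ->
  cnt (pi x) (pi y) = cnt (pi x') (pi y').
Proof.
move=> Hg <- <-; apply/eqP; rewrite eqn_leq cnt_le //=.
have := @cnt_le (g^-1)%g (g x) (g y) (groupVr Hg); by rewrite !permK.
Qed.

Lemma srg : d = 2 -> strongly_regular ONS (qadj e).
Proof.
move=> Hd; split; first exact: connN.
have Hd2 : 2 <= d by rewrite Hd.
have [x0 [y0 [z0 [H1 H2 H3 H4]]]] := geod2N_lift Hd2.
exists #|ONS|, (cnt (pi x0) (pi x0)), (cnt (pi x0) (pi y0)), (cnt (pi x0) (pi z0)).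
split => //.
- move=> B HB; have [x ->] := ONSP HB.
  have -> : [set y in ONS | adjN (pi x) y] = [set Z in ONS | adjN (pi x) Z && adjN (pi x) Z].
    by apply/setP => Z; rewrite !inE andbb.
  have [g Hg Egx] := vt x0 x; symmetry; exact: (cnt_eq Hg Egx Egx).
- move=> B C HBC; have [HB _] := adjN_in HBC; have [x Ex] := ONSP HB; subst B.
  have [y Hy Ey] := adjN_lift HBC; subst C.
  have [g Hg [Eg1 Eg2]] := at1 H1 Hy; symmetry; exact: cnt_eq Hg Eg1 Eg2.
- move=> B C HB HC HBC Hna.
  have : distN B C <= 2 by rewrite -Hd; apply: dist_le_diam.
  case/(distP connN _ HB HC) => p [Hp Hl Hs].
  case: p Hp Hl Hs => [|X [|C' [|]]] //= Hp Hl _.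
  + by subst C; rewrite eqxx in HBC.
  + by subst X; rewrite andbT in Hp; rewrite Hp in Hna.
  subst C'; case/and3P: Hp => HBX HXC _.
  have [x Ex] := ONSP HB; subst B.
  have [y Hy Ey] := adjN_lift HBX; subst X.
  have [z Hz Ez] := adjN_lift HXC; subst C.
  have Hxz : x != z by apply/negP => /eqP E; subst z; rewrite eqxx in HBC.
  have [g Hg [Eg1 Eg2 Eg3]] := at2 H1 H2 H3 Hy Hz Hxz.
  symmetry; exact: cnt_eq Hg Eg1 Eg3.
Qed.

Lemma lift_tr g x p x' p' : g \in G -> g x = x' -> map g p = p' ->
  exists2 h, h \in (G / N)%g &
    qactN h (pi x) = pi x' /\ map (qactN h) (map pi p) = map pi p'.
Proof.
move=> Hg E1 E2; exists (coset N g); first exact: mem_quotient.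
by rewrite qact_pi // E1 transport // E2.
Qed.

Lemma atN : arc_transitive ONS (qadj e) (G / N)%g (@qactN _ N) 2.
Proof.
move=> i Hi B P B' P' HP HP' Hs Hs'.
case/and3P: HP => HB HPp Hall; case/and3P: HP' => HB' HPp' Hall'.
have [x Ex] := ONSP HB; have [x' Ex'] := ONSP HB'; subst B B'.
have [p [Hp Ep]] := lift_path HPp; have [p' [Hp' Ep']] := lift_path HPp'.
subst P P'; move: Hs Hs'; rewrite !size_map => Hs Hs'; clear HPp HPp'.
case: i Hi Hs Hs' => [|[|[|i]]] // _.
- case: p Hp Hall => // _ _; case: p' Hp' Hall' => // _ _ _ _.
  have [g Hg Eg] := vt x x'; exact: (lift_tr (p := [::]) Hg Eg).
- case: p Hp Hall => [|y [|]] // Hp _; case: p' Hp' Hall' => [|y' [|]] // Hp' _ _ _.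
  move: Hp Hp'; rewrite /= !andbT => Hp Hp'.
  have [g Hg [Eg1 Eg2]] := at1 Hp Hp'.
  have Em : map g [:: y] = [:: y'] by rewrite /= Eg2.
  have [h Hh [Eh1 Eh2]] := lift_tr Hg Eg1 Em.
  by exists h => //; split.
- case: p Hp Hall => [|y [|z [|]]] // Hp Hall _; case: p' Hp' Hall' => [|y' [|z' [|]]] // Hp' Hall' _.
  move: Hp Hp'; rewrite /= !andbT => Hp Hp'. case/andP: Hp => Hp1 Hp2; case/andP: Hp' => Hp1' Hp2'.
  move: Hall Hall'; rewrite /= !andbT => Hall Hall'.
  have Hxz : x != z by apply/negP => /eqP E; subst z; rewrite eqxx in Hall.
  have Hxz' : x' != z' by apply/negP => /eqP E; subst z'; rewrite eqxx in Hall'.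
  have [g Hg [Eg1 Eg2 Eg3]] := at2 Hp1 Hp2 Hxz Hp1' Hp2' Hxz'.
  have Em : map g [:: y; z] = [:: y'; z'] by rewrite /= Eg2 Eg3.
  have [h Hh [Eh1 Eh2]] := lift_tr Hg Eg1 Em.
  by exists h => //; split.
Qed.

Lemma girthN4 : 2 <= d -> has_cycle ONS (qadj e) 4 -> girth_is ONS (qadj e) 4.
Proof.
move=> Hd Hc; split => //; split => // k /andP [Hk1 Hk2].
have -> : k = 3 by apply/eqP; rewrite eqn_leq Hk1 -ltnS Hk2.
exact: notriN_cyc.
Qed.

Lemma girthN5 : 2 <= d -> has_cycle ONS (qadj e) 5 -> ~~ has_cycle ONS (qadj e) 4 ->
  girth_is ONS (qadj e) 5.
Proof.
move=> Hd Hc H4; split => //; split => // k /andP [Hk1 Hk2].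
case: k Hk1 Hk2 => [|[|[|[|[|k]]]]] // _ _.
exact: notriN_cyc.
Qed.

Lemma cycT g : girth_is [set: T] e g -> has_cycle [set: T] e g.
Proof. by case=> _ []. Qed.

Lemma main :
  is_cover e N /\
  geodesic_transitive ONS (qadj e) (G / N)%g (@qactN _ N) (minn 3 d) /\
  [\/ complete_graph ONS (qadj e),
      [/\ arc_transitive ONS (qadj e) (G / N)%g (@qactN _ N) 2,
          strongly_regular ONS (qadj e) &
          girth_is ONS (qadj e) 4 \/ girth_is ONS (qadj e) 5]
    | 3 <= d /\
      exists g, girth_is [set: T] e g /\ girth_is ONS (qadj e) g].
Proof.
split; first exact: is_cov.
split; first exact: gtN.
case: (leqP d 1) => Hd1; first by constructor 1; apply: complete_case.
have Hd2 : 2 <= d by [].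
case: (ltngtP d 2) => Hd; first by rewrite ltnNge Hd2 in Hd.
- constructor 3; split => //.
  case: gir => Hg.
    by exists 4; split => //; apply: girthN4 => //; apply: cyc4N; apply: cycT.
  exists 5; split => //; apply: girthN5 => //; first by apply: cyc5N; apply: cycT.
  exact: no4N.
- constructor 2; split; [exact: atN | exact: srg |].
  case: gir => Hg.
    by left; apply: girthN4 => //; apply: cyc4N; apply: cycT.
  have [H4|H4] := boolP (has_cycle ONS (qadj e) 4); first by left; apply: girthN4.
  by right; apply: girthN5 => //; apply: cyc5N; apply: cycT.
Qed.

End Main.

Theorem theorem1p1 (T : finType) (e : rel T) (G N : {group {perm T}}) :
  symmetric e -> irreflexive e ->
  (forall g, g \in G -> forall x y, e (g x) (g y) = e x y) ->
  connectedg [set: T] e ->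
  geodesic_transitive [set: T] e G (fun g x => g x) 3 ->
  (girth_is [set: T] e 4 \/ girth_is [set: T] e 5) ->
  (N <| G)%g ->
  3 <= #|Norbits N| ->
  is_cover e N /\
  geodesic_transitive (Norbits N) (qadj e) (G / N)%g (@qactN _ N)
    (minn 3 (diam (Norbits N) (qadj e))) /\
  [\/ complete_graph (Norbits N) (qadj e),
      [/\ arc_transitive (Norbits N) (qadj e) (G / N)%g (@qactN _ N) 2,
          strongly_regular (Norbits N) (qadj e) &
          girth_is (Norbits N) (qadj e) 4 \/ girth_is (Norbits N) (qadj e) 5]
    | 3 <= diam (Norbits N) (qadj e) /\
      exists g, girth_is [set: T] e g /\ girth_is (Norbits N) (qadj e) g].
Proof.
move=> H1 H2 H3 H4 H5 H6 H7 H8.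
exact: (main H1 H2 H3 H4 H5 H7 H6 H8).
Qed.
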